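(* Let $\mathbb{F}_2=\langle a\rangle\ast\langle b\rangle$, let $f_A:\langle a\rangle\to\mathbb{R}$ be a bounded, alternating, periodic function, and let $f=f_A\ast 0$. Then the stabilizers $\mathrm{Stab}_{\mathrm{Aut}(\mathbb{F}_2)}(f)$, $\mathrm{Stab}_{\mathrm{Out}(\mathbb{F}_2)}(\widehat f)$ and $\mathrm{Stab}_{\mathrm{Out}(\mathbb{F}_2)}(\omega_f)$ are infinite.
   Context: Alternating means $f_A(x^{-1})=-f_A(x)$; periodic means $f_A(a^{k+n})=f_A(a^k)$ for some $n\neq0$ and all $k$. Each non-trivial element of $\mathbb{F}_2$ has a unique normal form $a^{k_1}b^{l_1}\cdots a^{k_m}b^{l_m}$ with all exponents non-zero except possibly $k_1$ or $l_m$, and $f(1)=0$, $f(a^{k_1}b^{l_1}\cdots a^{k_m}b^{l_m})=f_A(a^{k_1})+\dots+f_A(a^{k_m})$. Automorphisms act on functions by $\tau.f=f\circ\tau^{-1}$; $\widehat f(g)=\lim_{k\to\infty}f(g^k)/k$ is the homogenization (conjugation invariant, so the action on homogeneous quasimorphisms factors through $\mathrm{Out}(\mathbb{F}_2)$); $\omega_f\in\mathrm{H}^2_\mathrm{b}(\mathbb{F}_2,\mathbb{R})$ is the bounded class of $\partial f(g,h)=f(g)+f(h)-f(gh)$ with the natural action $\tau.\omega_f=\omega_{\tau.f}$ of $\mathrm{Out}(\mathbb{F}_2)$. *)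

(* Defs.v *)
From Stdlib Require Import Reals Lra Lia ZArith List Bool.
From Coquelicot Require Import Coquelicot.
Import ListNotations.
Open Scope R_scope.

Inductive gen := ga | gb.

(* a letter (g, s): the generator g if s = false, its inverse if s = true *)
Definition letter := (gen * bool)%type.

Definition gen_eqb (x y : gen) : bool :=
  match x, y with ga, ga => true | gb, gb => true | _, _ => false end.

Definition letter_eqb (x y : letter) : bool :=
  gen_eqb (fst x) (fst y) && Bool.eqb (snd x) (snd y).

Definition linv (x : letter) : letter := (fst x, negb (snd x)).

Definition step (x : letter) (s : list letter) : list letter :=
  match s with
  | y :: s' => if letter_eqb y (linv x) then s' else x :: s
  | [] => [x]
  end.

Fixpoint red (w : list letter) : list letter :=
  match w with
  | [] => []
  | x :: w' => step x (red w')
  end.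

Lemma step_length x s : (length (step x s) <= S (length s))%nat.
Proof.
  destruct s as [|y s]; simpl; [lia|].
  destruct (letter_eqb y (linv x)); simpl; lia.
Qed.

Lemma red_length w : (length (red w) <= length w)%nat.
Proof.
  induction w as [|x w IH]; simpl; [lia|].
  pose proof (step_length x (red w)); lia.
Qed.

Lemma red_step r : red r = r -> forall x, red (step x r) = step x r.
Proof.
  intros Hr x. destruct r as [|y r'']; [reflexivity|].
  assert (Hr'' : red r'' = r'').
  { simpl in Hr. destruct (red r'') as [|z s'] eqn:Hs.
    - simpl in Hr. inversion Hr; subst; first [exact Hs | reflexivity].
    - simpl in Hr. destruct (letter_eqb z (linv y)).
      + subst s'. pose proof (red_length r'') as Hl. rewrite Hs in Hl.
        simpl in Hl. lia.
      + inversion Hr; subst; first [exact Hs | reflexivity]. }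
  simpl. destruct (letter_eqb y (linv x)) eqn:E.
  - exact Hr''.
  - change (red (x :: y :: r'')) with (step x (red (y :: r''))).
    rewrite Hr. simpl. rewrite E. reflexivity.
Qed.

Lemma red_idem w : red (red w) = red w.
Proof.
  induction w as [|x w IH]; [reflexivity|].
  simpl. apply red_step. exact IH.
Qed.

Definition F2 := { w : list letter | red w = w }.

Definition norm (w : list letter) : F2 := exist _ (red w) (red_idem w).

Definition word (g : F2) : list letter := proj1_sig g.

Definition one : F2 := norm [].
Definition mult (g h : F2) : F2 := norm (word g ++ word h).
Definition ginv (g : F2) : F2 := norm (rev (map linv (word g))).
Fixpoint gpow (g : F2) (k : nat) : F2 :=
  match k with O => one | S k' => mult g (gpow g k') end.

Definition lsign (s : bool) : Z := if s then (-1)%Z else 1%Z.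

(* [fsum fA acc w]: acc is the exponent of the current (maximal) run of
   a-letters; each maximal a-syllable a^k (k <> 0) contributes fA k,
   b-syllables contribute 0. *)
Fixpoint fsum (fA : Z -> R) (acc : Z) (w : list letter) : R :=
  match w with
  | [] => if Z.eqb acc 0 then 0 else fA acc
  | (ga, s) :: w' => fsum fA (acc + lsign s)%Z w'
  | (gb, _) :: w' => (if Z.eqb acc 0 then 0 else fA acc) + fsum fA 0%Z w'
  end.

(* fA k represents f_A(a^k) *)
Definition free_prod_zero (fA : Z -> R) : F2 -> R :=
  fun g => fsum fA 0%Z (word g).

Definition bounded_Z (fA : Z -> R) : Prop := exists C, forall k, Rabs (fA k) <= C.
Definition alternating (fA : Z -> R) : Prop := forall k, fA (- k)%Z = - fA k.
Definition periodic (fA : Z -> R) : Prop :=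
  exists n : Z, n <> 0%Z /\ forall k, fA (k + n)%Z = fA k.

Record Aut := {
  fwd : F2 -> F2;
  bwd : F2 -> F2;
  fwd_hom : forall x y, fwd (mult x y) = mult (fwd x) (fwd y);
  bwd_fwd : forall x, bwd (fwd x) = x;
  fwd_bwd : forall x, fwd (bwd x) = x }.

Definition act (tau : Aut) (f : F2 -> R) : F2 -> R := fun g => f (bwd tau g).

Definition homog (f : F2 -> R) : F2 -> R :=
  fun g => real (Lim_seq (fun k => f (gpow g k) / INR k)).

Definition cob (f : F2 -> R) (g h : F2) : R := f g + f h - f (mult g h).

Definition bounded_F2 (b : F2 -> R) : Prop := exists C, forall g, Rabs (b g) <= C.

(* omega_{f1} = omega_{f2} in H^2_b(F_2,R): the bounded cocycles differ by the
   coboundary of a bounded 1-cochain *)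
Definition same_bclass (f1 f2 : F2 -> R) : Prop :=
  exists beta, bounded_F2 beta /\
    forall g h, cob f1 g h - cob f2 g h = cob beta g h.

(* tau and sigma have the same image in Out(F_2) *)
Definition out_eq (tau sigma : Aut) : Prop :=
  exists c : F2, forall g, fwd tau g = mult (mult c (fwd sigma g)) (ginv c).

Definition aut_eq (tau sigma : Aut) : Prop := forall g, fwd tau g = fwd sigma g.

Definition stab_Aut (f : F2 -> R) (tau : Aut) : Prop :=
  forall g, act tau f g = f g.

(* the stabilizers in Out are unions of Inn-cosets; we describe them by
   their preimages in Aut *)
Definition stab_Out_homog (f : F2 -> R) (tau : Aut) : Prop :=
  forall g, act tau (homog f) g = homog f g.

Definition stab_Out_bclass (f : F2 -> R) (tau : Aut) : Prop :=
  same_bclass (act tau f) f.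

Definition infinite_in_Aut (P : Aut -> Prop) : Prop :=
  forall l : list Aut, exists tau, P tau /\ forall sigma, In sigma l -> ~ aut_eq tau sigma.

(* the image of P in Out(F_2) is infinite *)
Definition infinite_in_Out (P : Aut -> Prop) : Prop :=
  forall l : list Aut, exists tau, P tau /\ forall sigma, In sigma l -> ~ out_eq tau sigma.

(* Main.v *)
Require Import Defs.
From Stdlib Require Import Reals ZArith List Lia Lra Bool ProofIrrelevance FunctionalExtensionality.
From Coquelicot Require Import Coquelicot.
Import ListNotations.

Lemma letter_eqb_refl x : letter_eqb x x = true.
Proof. destruct x as [[] []]; reflexivity. Qed.

Lemma letter_eqb_true x y : letter_eqb x y = true -> x = y.
Proof. destruct x as [[] []], y as [[] []]; cbv; intro H; first [reflexivity | discriminate]. Qed.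

Lemma linv_linv x : linv (linv x) = x.
Proof. destruct x; unfold linv; simpl; rewrite negb_involutive; reflexivity. Qed.

Definition inv (u : list letter) := rev (map linv u).

Lemma inv_inv u : inv (inv u) = u.
Proof. unfold inv. rewrite map_rev, rev_involutive, map_map.
  rewrite <- (map_id u) at 2. apply map_ext. apply linv_linv. Qed.

Lemma inv_app u v : inv (u ++ v) = inv v ++ inv u.
Proof. unfold inv. rewrite map_app, rev_app_distr. reflexivity. Qed.

Lemma inv_cons x u : inv (x :: u) = inv u ++ [linv x].
Proof. reflexivity. Qed.

Lemma red_tail x s : red (x :: s) = x :: s -> red s = s.
Proof.
  simpl. intro H. destruct (red s) as [|y t] eqn:E.
  - simpl in H. inversion H. subst. reflexivity.
  - simpl in H. destruct (letter_eqb y (linv x)).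
    + subst t. pose proof (red_length s) as Hl. rewrite E in Hl. simpl in Hl. lia.
    + inversion H. reflexivity.
Qed.

Lemma step_cancel x s : red s = s -> step x (step (linv x) s) = s.
Proof.
  intro Hs. destruct s as [|z s'].
  - simpl. rewrite letter_eqb_refl. reflexivity.
  - simpl. destruct (letter_eqb z (linv (linv x))) eqn:E.
    + apply letter_eqb_true in E. rewrite linv_linv in E. subst z.
      simpl in Hs. pose proof (red_tail _ _ Hs) as Ht. rewrite Ht in Hs. exact Hs.
    + simpl. rewrite letter_eqb_refl. reflexivity.
Qed.

Lemma red_step_app x r v : red (step x r ++ v) = step x (red (r ++ v)).
Proof.
  destruct r as [|y r']; [reflexivity|].
  simpl. destruct (letter_eqb y (linv x)) eqn:E.
  - apply letter_eqb_true in E. subst y. simpl.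
    rewrite step_cancel; [reflexivity| apply red_idem].
  - reflexivity.
Qed.

Lemma red_redl u v : red (red u ++ v) = red (u ++ v).
Proof.
  induction u as [|x u IH]; [reflexivity|].
  simpl. rewrite red_step_app, IH. reflexivity.
Qed.

Lemma red_redr u v : red (u ++ red v) = red (u ++ v).
Proof.
  induction u as [|x u IH]; simpl; [apply red_idem|]. rewrite IH. reflexivity.
Qed.

Lemma red_cancel u v : red (u ++ inv u ++ v) = red v.
Proof.
  revert v. induction u as [|x u IH]; intro v; [reflexivity|].
  rewrite inv_cons.
  replace ((x :: u) ++ (inv u ++ [linv x]) ++ v) with (x :: (u ++ inv u ++ (linv x :: v)))
    by (simpl; rewrite <- !app_assoc; reflexivity).
  simpl. rewrite (IH (linv x :: v)). simpl. apply step_cancel. apply red_idem.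
Qed.

Lemma red_inv_single v y : red v = [y] -> red (inv v) = [linv y].
Proof.
  intro H.
  rewrite <- (red_cancel [linv y] (inv v)).
  assert (E : inv [linv y] = [y]) by (unfold inv; simpl; rewrite linv_linv; reflexivity).
  rewrite E. rewrite <- red_redr.
  assert (E2 : red ([y] ++ inv v) = []).
  { rewrite <- H, red_redl. rewrite <- (app_nil_r (inv v)). rewrite red_cancel. reflexivity. }
  rewrite E2. reflexivity.
Qed.

Lemma norm_word (g : F2) w : red w = word g -> Defs.norm w = g.
Proof.
  destruct g as [w0 H]. simpl. intro E. unfold Defs.norm.
  apply ProofIrrelevanceTheory.subset_eq_compat. exact E.
Qed.

Lemma word_red (g : F2) : red (word g) = word g.
Proof. destruct g; assumption. Qed.

Definition bbase (s0 : bool) (k : nat) : list letter := (gb, false) :: repeat (ga, s0) k.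

Definition img (s0 : bool) (k : nat) (x : letter) : list letter :=
  match x with
  | (ga, s) => [(ga, s)]
  | (gb, false) => bbase s0 k
  | (gb, true) => inv (bbase s0 k)
  end.

Definition sub s0 k (w : list letter) := flat_map (img s0 k) w.

Lemma img_linv s0 k x : img s0 k (linv x) = inv (img s0 k x).
Proof.
  destruct x as [[] []]; try reflexivity. simpl. rewrite inv_inv. reflexivity.
Qed.

Lemma sub_app s0 k u v : sub s0 k (u ++ v) = sub s0 k u ++ sub s0 k v.
Proof. apply flat_map_app. Qed.

Lemma sub_inv s0 k u : sub s0 k (inv u) = inv (sub s0 k u).
Proof.
  induction u as [|x u IH]; [reflexivity|].
  rewrite inv_cons, sub_app, IH.
  change (sub s0 k [linv x]) with (img s0 k (linv x) ++ []). rewrite app_nil_r, img_linv.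
  change (sub s0 k (x :: u)) with (img s0 k x ++ sub s0 k u).
  rewrite inv_app. reflexivity.
Qed.

Lemma red_sub_step s0 k x r : red (sub s0 k (step x r)) = red (img s0 k x ++ sub s0 k r).
Proof.
  destruct r as [|y r']; [reflexivity|].
  simpl. destruct (letter_eqb y (linv x)) eqn:E.
  - apply letter_eqb_true in E. subst y. rewrite img_linv.
    rewrite red_cancel. reflexivity.
  - reflexivity.
Qed.

Lemma red_sub_red s0 k w : red (sub s0 k (red w)) = red (sub s0 k w).
Proof.
  induction w as [|x w IH]; [reflexivity|].
  simpl red. rewrite red_sub_step. simpl sub.
  rewrite <- red_redr. fold (sub s0 k w). fold (sub s0 k (red w)). rewrite IH.
  rewrite red_redr. reflexivity.
Qed.

Definition hom s0 k (g : F2) : F2 := Defs.norm (sub s0 k (word g)).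

Lemma hom_mult s0 k (x y : F2) : hom s0 k (Defs.mult x y) = Defs.mult (hom s0 k x) (hom s0 k y).
Proof.
  unfold hom, Defs.mult. apply norm_word. simpl.
  rewrite red_sub_red, sub_app. rewrite red_redl, red_redr. reflexivity.
Qed.

Lemma sub_rep_a s0 k s m : sub s0 k (repeat (ga, s) m) = repeat (ga, s) m.
Proof. induction m as [|m IH]; simpl; [reflexivity|]. fold (sub s0 k (repeat (ga,s) m)). rewrite IH. reflexivity. Qed.

Lemma red_sub_img s0 k x : red (sub (negb s0) k (img s0 k x)) = [x].
Proof.
  assert (Hb : red (sub (negb s0) k (bbase s0 k)) = [(gb, false)]).
  { unfold bbase. simpl. fold (sub (negb s0) k (repeat (ga, s0) k)).
    rewrite sub_rep_a.
    assert (E : repeat (ga, s0) k = inv (repeat (ga, negb s0) k)).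
    { unfold inv. rewrite map_repeat, rev_repeat. unfold linv. simpl. rewrite negb_involutive. reflexivity. }
    rewrite E. rewrite <- (app_nil_r (inv _)). rewrite red_cancel. reflexivity. }
  destruct x as [[] []]; try reflexivity.
  - simpl img. rewrite sub_inv. apply (red_inv_single _ (gb, false)). exact Hb.
  - exact Hb.
Qed.

Lemma red_sub_sub s0 k w : red (sub (negb s0) k (sub s0 k w)) = red w.
Proof.
  induction w as [|x w IH]; [reflexivity|].
  simpl sub. fold (sub s0 k w). rewrite sub_app.
  rewrite <- red_redr, IH, <- red_redl, red_sub_img.
  change (x :: w) with ([x] ++ w). rewrite red_redr. reflexivity.
Qed.

Lemma hom_inv s0 k x : hom (negb s0) k (hom s0 k x) = x.
Proof.
  unfold hom. apply norm_word. simpl.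
  rewrite red_sub_red, red_sub_sub. apply word_red.
Qed.

Lemma hom_one s0 k : hom s0 k Defs.one = Defs.one.
Proof. reflexivity. Qed.

Lemma hom_gpow s0 k g m : hom s0 k (gpow g m) = gpow (hom s0 k g) m.
Proof. induction m; simpl; [reflexivity|]. rewrite hom_mult, IHm. reflexivity. Qed.

Definition tau (k : nat) : Aut := {|
  fwd := hom false k; bwd := hom true k;
  fwd_hom := hom_mult false k;
  bwd_fwd := hom_inv false k;
  fwd_bwd := hom_inv true k |}.

Fixpoint syl (w : list letter) : Z * list (bool * Z) :=
  match w with
  | [] => (0%Z, [])
  | (ga, s) :: w' => ((fst (syl w') + lsign s)%Z, snd (syl w'))
  | (gb, s) :: w' => (0%Z, (s, fst (syl w')) :: snd (syl w'))
  end.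

Definition headtrue (l : list (bool * Z)) : bool :=
  match l with (true, _) :: _ => true | _ => false end.

Fixpoint shiftL (K : Z) (l : list (bool * Z)) : list (bool * Z) :=
  match l with
  | [] => []
  | (s, q) :: rest => (s, (q + (if s then 0 else K) - (if headtrue rest then K else 0))%Z) :: shiftL K rest
  end.

Definition shift K (pl : Z * list (bool * Z)) :=
  ((fst pl - (if headtrue (snd pl) then K else 0))%Z, shiftL K (snd pl)).

Fixpoint sred (l : list (bool * Z)) : Prop :=
  match l with
  | [] => True
  | (s1, q1) :: rest =>
      (match rest with (s2, _) :: _ => q1 <> 0%Z \/ s1 = s2 | [] => True end) /\ sred rest
  end.

Lemma syl_rep s m t : syl (repeat (ga, s) m ++ t) = ((fst (syl t) + lsign s * Z.of_nat m)%Z, snd (syl t)).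
Proof.
  induction m as [|m IH]; simpl.
  - destruct (syl t); simpl; f_equal; lia.
  - rewrite IH. simpl. f_equal. lia.
Qed.

Lemma syl_sub s0 k w : syl (sub s0 k w) = shift (lsign s0 * Z.of_nat k)%Z (syl w).
Proof.
  induction w as [|[[] s] w IH]; [reflexivity| |].
  - change (sub s0 k ((ga, s) :: w)) with ((ga, s) :: sub s0 k w).
    simpl syl. rewrite IH. unfold shift. simpl. f_equal. lia.
  - destruct s.
    + change (sub s0 k ((gb, true) :: w)) with (inv (bbase s0 k) ++ sub s0 k w).
      replace (inv (bbase s0 k)) with (repeat (ga, negb s0) k ++ [(gb, true)]).
      2:{ unfold inv, bbase. simpl. rewrite map_repeat, rev_repeat. reflexivity. }
      rewrite <- app_assoc. rewrite syl_rep. simpl. rewrite IH. unfold shift. simpl.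
      assert (Hn : lsign (negb s0) = (- lsign s0)%Z) by (destruct s0; reflexivity).
      rewrite Hn, Z.add_0_r. f_equal. ring.
    + change (sub s0 k ((gb, false) :: w)) with ((gb, false) :: (repeat (ga, s0) k ++ sub s0 k w)).
      simpl syl. rewrite syl_rep, IH. unfold shift. simpl. f_equal. f_equal. f_equal. lia.
Qed.

Lemma step_letter_eq x y r : letter_eqb y (linv x) = true -> step x (y :: r) = r.
Proof. intro E. simpl. rewrite E. reflexivity. Qed.

Lemma syl_red v : sred (snd (syl v)) -> syl (red v) = syl v.
Proof.
  induction v as [|x v IH]; [reflexivity|]. intro Hs.
  assert (Hs' : sred (snd (syl v))).
  { destruct x as [[] s]; simpl in Hs; [exact Hs|]. destruct (snd (syl v)) as [|[]]; simpl in *; tauto. }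
  specialize (IH Hs'). simpl red.
  destruct (red v) as [|y r'] eqn:E.
  - simpl. destruct x as [[] s]; simpl; rewrite <- IH; reflexivity.
  - simpl step. destruct (letter_eqb y (linv x)) eqn:Ey.
    + apply letter_eqb_true in Ey. subst y.
      destruct x as [[] s].
      * simpl in IH |- *. rewrite <- IH. simpl. destruct (syl r') as [p l]. simpl. f_equal. destruct s; simpl; lia.
      * simpl in IH. simpl in Hs. rewrite <- IH in Hs. simpl in Hs.
        destruct Hs as [[H|H] _]; [congruence|]. destruct s; discriminate.
    + destruct x as [[] s]; simpl; rewrite <- IH; reflexivity.
Qed.

Lemma lead_a w : red w = w -> forall s w', w = (ga, s) :: w' -> (lsign s * fst (syl w) > 0)%Z.
Proof.
  induction w as [|x w IH]; intros Hr s w' E; [discriminate|].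
  inversion E; subst x w'. pose proof (red_tail _ _ Hr) as Ht.
  simpl. destruct w as [|[[] s'] w''].
  - simpl. destruct s; simpl; lia.
  - assert (s' = s).
    { destruct (Bool.bool_dec s' s) as [|n]; [assumption|].
      exfalso. change (step (ga, s) (red ((ga, s') :: w'')) = (ga, s) :: (ga, s') :: w'') in Hr.
      cbv [letter] in *. rewrite Ht in Hr. simpl in Hr.
      assert (letter_eqb (ga, s') (linv (ga, s)) = true) by (destruct s, s'; cbv; first [reflexivity | exfalso; congruence]).
      rewrite H in Hr. pose proof (f_equal (@length _) Hr) as HL. simpl in HL. lia. }
    subst s'. specialize (IH Ht s w'' eq_refl). simpl in IH. change (fst (syl ((ga, s) :: w''))) with (fst (syl w'') + lsign s)%Z.
    destruct s; unfold lsign in *; lia.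
  - simpl. destruct s; simpl; lia.
Qed.

Lemma sred_red w : red w = w -> sred (snd (syl w)).
Proof.
  induction w as [|x w IH]; [simpl; tauto|]. intro Hr.
  pose proof (red_tail _ _ Hr) as Ht. specialize (IH Ht).
  destruct x as [[] e]; simpl; [exact IH|]. split; [|exact IH].
  destruct w as [|[[] s] w'].
  - simpl. tauto.
  - simpl. destruct (snd (syl w')) as [|[s2 q2] ll]; [exact I|]. left. pose proof (lead_a _ Ht s w' eq_refl) as L. simpl in L. intro Hz0.
    rewrite Hz0 in L. lia.
  - simpl. right. destruct (Bool.bool_dec e s) as [|n]; [assumption|].
    exfalso. change (step (gb, e) (red ((gb, s) :: w')) = (gb, e) :: (gb, s) :: w') in Hr.
    cbv [letter] in *. rewrite Ht in Hr. simpl in Hr.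
    assert (letter_eqb (gb, s) (linv (gb, e)) = true) by (destruct s, e; cbv; first [reflexivity | exfalso; congruence]).
    rewrite H in Hr. pose proof (f_equal (@length _) Hr) as HL. simpl in HL. lia.
Qed.

Lemma sred_shift K l : sred l -> sred (shiftL K l).
Proof.
  induction l as [|[s1 q1] rest IH]; [simpl; tauto|].
  simpl. intros [H1 H2]. split; [|apply IH; exact H2].
  destruct rest as [|[s2 q2] rest']; [tauto|]. simpl.
  destruct H1 as [H1|H1]; [|right; exact H1].
  destruct (Bool.bool_dec s1 s2) as [|n]; [right; assumption|left].
  destruct s1, s2; try congruence; lia.
Qed.

Fixpoint sumA (fA : Z -> R) (l : list (bool * Z)) : R :=
  match l with [] => 0%R | (_, q) :: l' => (fA q + sumA fA l')%R end.

Lemma fsum_syl fA (h0 : fA 0%Z = 0%R) w : forall acc,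
  fsum fA acc w = (fA (acc + fst (syl w))%Z + sumA fA (snd (syl w)))%R.
Proof.
  induction w as [|[[] s] w IH]; intro acc.
  - simpl. rewrite Z.add_0_r. destruct (Z.eqb_spec acc 0); [subst; rewrite h0|]; lra.
  - simpl. rewrite IH. f_equal. f_equal. lia.
  - simpl. rewrite IH. rewrite Z.add_0_r.
    destruct (Z.eqb_spec acc 0); [subst; rewrite h0|]; simpl; lra.
Qed.

Lemma sumA_shift fA K (hK : forall z, fA (z + K)%Z = fA z) (hK' : forall z, fA (z - K)%Z = fA z) l :
  sumA fA (shiftL K l) = sumA fA l.
Proof.
  induction l as [|[s q] l IH]; [reflexivity|]. simpl. rewrite IH. f_equal.
  destruct s, (headtrue l).
  - replace (q + 0 - K)%Z with (q - K)%Z by lia. apply hK'.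
  - f_equal; lia.
  - replace (q + K - K)%Z with q by lia. reflexivity.
  - replace (q + K - 0)%Z with (q + K)%Z by lia. apply hK.
Qed.

Lemma stab_word fA (h0 : fA 0%Z = 0%R) s0 k
  (hK : forall z, fA (z + lsign s0 * Z.of_nat k)%Z = fA z)
  (hK' : forall z, fA (z - lsign s0 * Z.of_nat k)%Z = fA z) w :
  red w = w -> fsum fA 0 (red (sub s0 k w)) = fsum fA 0 w.
Proof.
  intro Hw. rewrite !fsum_syl by exact h0.
  rewrite syl_red.
  2:{ rewrite syl_sub. unfold shift. simpl. apply sred_shift. apply sred_red. exact Hw. }
  rewrite syl_sub. unfold shift. simpl. rewrite sumA_shift by assumption.
  f_equal. destruct (headtrue (snd (syl w))).
  - apply hK'.
  - f_equal. lia.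
Qed.

Lemma per_nat (fA : Z -> R) n (hp : forall k, fA (k + n)%Z = fA k) m : forall z, fA (z + Z.of_nat m * n)%Z = fA z.
Proof.
  induction m as [|m IH]; intro z.
  - f_equal; lia.
  - rewrite <- (IH z). rewrite <- (hp (z + Z.of_nat m * n)%Z). f_equal. lia.
Qed.

Lemma per_Z (fA : Z -> R) n (hp : forall k, fA (k + n)%Z = fA k) c z : fA (z + c * n)%Z = fA z.
Proof.
  destruct (Z.le_gt_cases 0 c).
  - rewrite <- (Z2Nat.id c) by lia. apply per_nat; assumption.
  - replace c with (- Z.of_nat (Z.to_nat (- c)))%Z by lia.
    set (m := Z.to_nat (-c)).
    rewrite <- (per_nat fA n hp m (z + - Z.of_nat m * n)%Z). f_equal. ring.
Qed.

Definition ls (x : letter) : Z := match x with (ga, s) => lsign s | (gb, _) => 0%Z end.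
Fixpoint esum (w : list letter) : Z := match w with [] => 0%Z | x :: w' => (ls x + esum w')%Z end.

Lemma esum_step x r : esum (step x r) = (ls x + esum r)%Z.
Proof.
  destruct r as [|y r']; [reflexivity|]. simpl.
  destruct (letter_eqb y (linv x)) eqn:E; [|reflexivity].
  apply letter_eqb_true in E. subst y. simpl.
  destruct x as [[] []]; cbn [ls linv lsign fst snd negb]; lia.
Qed.

Lemma esum_red w : esum (red w) = esum w.
Proof. induction w; simpl; [reflexivity|]. rewrite esum_step, IHw. reflexivity. Qed.

Lemma esum_app u v : esum (u ++ v) = (esum u + esum v)%Z.
Proof. induction u; simpl; [reflexivity|]. rewrite IHu. lia. Qed.

Lemma esum_inv u : esum (inv u) = (- esum u)%Z.
Proof.
  induction u as [|x u IH]; [reflexivity|]. rewrite inv_cons, esum_app, IH.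
  simpl. destruct x as [[] []]; cbn [ls linv lsign fst snd negb map rev esum]; lia.
Qed.

Lemma esum_rep s m : esum (repeat (ga, s) m) = (lsign s * Z.of_nat m)%Z.
Proof. induction m; simpl; [lia|]. rewrite IHm. lia. Qed.

Definition bel : F2 := Defs.norm [(gb, false)].
Definition phi (s : Aut) : Z := esum (word (fwd s bel)).

Lemma phi_tau k : phi (tau k) = Z.of_nat k.
Proof.
  unfold phi. simpl. unfold hom. simpl. rewrite esum_step, esum_red.
  rewrite app_nil_r, esum_rep. cbn [ls lsign]. lia.
Qed.

Lemma esum_mult (x y : F2) : esum (word (Defs.mult x y)) = (esum (word x) + esum (word y))%Z.
Proof. unfold Defs.mult. simpl. rewrite esum_red, esum_app. reflexivity. Qed.

Lemma phi_out t s : out_eq t s -> phi t = phi s.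
Proof.
  intros [c Hc]. unfold phi. rewrite Hc. rewrite !esum_mult.
  unfold ginv. simpl. rewrite esum_red. fold (inv (word c)). rewrite esum_inv. lia.
Qed.

Lemma phi_aut t s : aut_eq t s -> phi t = phi s.
Proof. intro H. unfold phi. rewrite H. reflexivity. Qed.

Lemma in_bound (l : list Aut) s : In s l ->
  (Z.abs_nat (phi s) <= list_sum (map (fun t => Z.abs_nat (phi t)) l))%nat.
Proof.
  induction l as [|t l IH]; [intros []|]. intros [->|H]; simpl; [lia|]. specialize (IH H). lia.
Qed.

Theorem corollary3p21 (fA : Z -> R) :
  bounded_Z fA -> alternating fA -> periodic fA ->
  infinite_in_Aut (stab_Aut (free_prod_zero fA)) /\
  infinite_in_Out (stab_Out_homog (free_prod_zero fA)) /\
  infinite_in_Out (stab_Out_bclass (free_prod_zero fA)).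
Proof.
  intros _ Halt [n [Hn Hp]].
  assert (h0 : fA 0%Z = 0%R) by (pose proof (Halt 0%Z) as H; simpl in H; lra).
  assert (Hstab : forall k, (exists c, Z.of_nat k = c * n)%Z -> stab_Aut (free_prod_zero fA) (tau k)).
  { intros k [c Hc] g. unfold act, free_prod_zero. simpl. unfold hom. simpl.
    apply stab_word; [exact h0 | | | apply word_red]; intro z; change (lsign true) with (-1)%Z.
    - replace (z + -1 * Z.of_nat k)%Z with (z + (- c) * n)%Z by lia. apply per_Z; assumption.
    - replace (z - -1 * Z.of_nat k)%Z with (z + c * n)%Z by lia. apply per_Z; assumption. }
  assert (Hhom : forall k, stab_Aut (free_prod_zero fA) (tau k) -> stab_Out_homog (free_prod_zero fA) (tau k)).
  { intros k Hs g. unfold act, homog. f_equal. apply Lim_seq_ext. intro m.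
    simpl. rewrite <- hom_gpow. f_equal. specialize (Hs (gpow g m)). unfold act in Hs. simpl in Hs.
    exact Hs. }
  assert (Hbc : forall k, stab_Aut (free_prod_zero fA) (tau k) -> stab_Out_bclass (free_prod_zero fA) (tau k)).
  { intros k Hs. exists (fun _ => 0%R). split.
    - exists 0%R. intro. rewrite Rabs_R0. lra.
    - intros g h. unfold cob. rewrite !Hs. lra. }
  assert (Hk : forall l : list Aut, exists k, (exists c, Z.of_nat k = c * n)%Z /\
            forall s, In s l -> phi s <> Z.of_nat k).
  { intro l. set (N := list_sum (map (fun t => Z.abs_nat (phi t)) l)).
    exists (S N * Z.abs_nat n)%nat. split.
    - rewrite Nat2Z.inj_mul, Zabs2Nat.id_abs.
      destruct (Z.abs_spec n) as [[_ ->]|[_ ->]].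
      + exists (Z.of_nat (S N)). reflexivity.
      + exists (- Z.of_nat (S N))%Z. ring.
    - intros s Hs. pose proof (in_bound l s Hs) as B. fold N in B.
      assert (Z.abs_nat n >= 1)%nat by lia.
      assert (S N * Z.abs_nat n >= S N)%nat by nia. lia. }
  split; [|split]; intro l; destruct (Hk l) as [k [Hc Hl]]; exists (tau k).
  - split; [apply Hstab; exact Hc|]. intros s Hs E. apply (Hl s Hs). rewrite <- (phi_aut _ _ E). apply phi_tau.
  - split; [apply Hhom, Hstab; exact Hc|]. intros s Hs E. apply (Hl s Hs). rewrite <- (phi_out _ _ E). apply phi_tau.
  - split; [apply Hbc, Hstab; exact Hc|]. intros s Hs E. apply (Hl s Hs). rewrite <- (phi_out _ _ E). apply phi_tau.
Qed.
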